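(* For games with cost function $c(x)=x^2$, the worst-case price of anarchy is strictly larger than $2$; that is, there exists such a game, a Nash equilibrium $s$ and an assignment $s^*$ of it with $C(s)/C(s^* )>2$.
   Context: A game is specified by a cost function $c$ (here $c(x)=x^2$), a time horizon $T$ with slots $t=1,\dots,T$, and a set of jobs, each job $j$ having integer release time $r_j$ and integer deadline $d_j$ with $0<r_j<d_j<T$. An assignment $s$ gives each job $j$ a slot $s_j$ with $r_j\le s_j<d_j$. The load of slot $t$ is $l_t(s)=|\{j:s_j=t\}|$ and $C(s)=\sum_{t=1}^T c(l_t(s))$. An assignment $s$ is a Nash equilibrium if for every job $j$ and every slot $t\neq s_j$ with $r_j\le t<d_j$: $\frac{c(l_{s_j}(s))}{l_{s_j}(s)}\le\frac{c(l_t(s)+1)}{l_t(s)+1}$. The price of anarchy of a game is $\max_{s\text{ a NE}}C(s)/\min_{s^*}C(s^* )$. *)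

(* Defs.v *)
From HB Require Import structures.
From mathcomp Require Import all_boot all_order all_algebra.
Set Implicit Arguments. Unset Strict Implicit. Unset Printing Implicit Defensive.
Import Order.TTheory GRing.Theory Num.Theory.
Local Open Scope ring_scope.

(* A game: horizon T, n jobs indexed by 'I_n, release times r, deadlines d. *)
Definition valid_game (T n : nat) (r d : 'I_n -> nat) : Prop :=
  forall j, (0 < r j)%N /\ (r j < d j)%N /\ (d j < T)%N.

Definition feasible (n : nat) (r d : 'I_n -> nat) (s : 'I_n -> nat) : Prop :=
  forall j, (r j <= s j)%N /\ (s j < d j)%N.

Definition load (n : nat) (s : 'I_n -> nat) (t : nat) : nat :=
  #|[pred j | s j == t]|.

Definition cost (c : nat -> rat) (T n : nat) (s : 'I_n -> nat) : rat :=
  \sum_(1 <= t < T.+1) c (load s t).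

Definition is_NE (c : nat -> rat) (n : nat) (r d : 'I_n -> nat)
    (s : 'I_n -> nat) : Prop :=
  feasible r d s /\
  forall (j : 'I_n) (t : nat), t != s j -> (r j <= t)%N -> (t < d j)%N ->
    c (load s (s j)) / (load s (s j))%:R <= c (load s t).+1 / ((load s t).+1)%:R.

Definition csq (x : nat) : rat := (x%:R) ^+ 2.

(* Main.v *)
Require Import Defs.
From mathcomp Require Import all_boot all_order all_algebra.
Import Order.TTheory GRing.Theory Num.Theory.
Local Open Scope ring_scope.

Lemma load_count (n : nat) (S : seq nat) (t : nat) :
  size S = n -> load (fun j : 'I_n => nth 0%N S j) t = count_mem t S.
Proof.
move=> HS; rewrite /load -sum1_card.
rewrite -(big_mkord (fun j => nth 0%N S j == t) (fun _ => 1%N)).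
rewrite sum1_count /index_iota subn0 -HS.
by rewrite -[in RHS](mkseq_nth 0%N S) /mkseq count_map.
Qed.

Definition LV : seq nat := nseq 120 0 ++ nseq 120 1 ++ nseq 60 2 ++ nseq 20 3
  ++ nseq 5 4 ++ nseq 2 5 ++ [:: 6]%N.
Definition LL : seq nat := 0%N :: LV.
Definition SL : seq nat := flatten [seq nseq (nth 0 LV i) i.+1 | i <- iota 0 328].
Definition SS : seq nat := [seq j.+1 | j <- iota 0 320] ++
  [:: 321; 321; 322; 322; 323; 323; 324; 324; 325; 325;
      326; 326; 327; 327; 328; 328]%N.
Definition rj (k : nat) : nat :=
  match k with 0 | 1 => 1 | 2 => 121 | 3 => 241 | 4 => 301 | 5 => 321 | _ => 326 end%N.
Definition RJ (j : nat) : nat := rj (nth 0 LL (nth 0 SL j)).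

Lemma size_SL : size SL = 336%N. Proof. by vm_compute. Qed.
Lemma size_SS : size SS = 336%N. Proof. by vm_compute. Qed.


Lemma allI (P : pred nat) m : all P (iota 0 m) -> forall j, (j < m)%N -> P j.
Proof. by move=> /allP H j Hj; apply: H; rewrite mem_iota. Qed.
Arguments allI {P m}.

Lemma csq_div (l : nat) : csq l / l%:R = l%:R.
Proof.
rewrite /csq; case: l => [|l]; first by rewrite mul0r.
by rewrite expr2 mulrK // unitfE pnatr_eq0.
Qed.

Lemma feas_gen (S : seq nat) (R : nat -> nat) n D :
  all (fun j => (R j <= nth 0 S j < D)%N) (iota 0 n) ->
  feasible (fun j : 'I_n => R j) (fun _ => D) (fun j => nth 0%N S j).
Proof. by move=> H j; have /andP[-> ->] := allI H j (ltn_ord j). Qed.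

Lemma ne_gen (S L : seq nat) (R : nat -> nat) n D :
  size S = n ->
  all (fun t => count_mem t S == nth 0 L t) (iota 0 D) ->
  all (fun j => (R j <= nth 0 S j < D)%N) (iota 0 n) ->
  all (fun j => all (fun t => nth 0 L (nth 0 S j) <= (nth 0 L t).+1)
     (iota (R j) (D - R j)))%N (iota 0 n) ->
  is_NE csq (fun j : 'I_n => R j) (fun _ => D) (fun j => nth 0%N S j).
Proof.
move=> HS Ht Hf Hne; split; first exact: feas_gen.
move=> j t _ Hr Hd.
rewrite !load_count // !csq_div ler_nat.
have /andP[_ Hs] := allI Hf j (ltn_ord j).
rewrite (eqP (allI Ht _ Hs)) (eqP (allI Ht _ Hd)).
have /allP := allI Hne _ (ltn_ord j); apply.
by rewrite mem_iota Hr subnKC // (leq_trans Hr (ltnW Hd)).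
Qed.

Lemma ratio_gen (a b : nat) : (0 < b)%N -> (2 * b < a)%N -> 2 < a%:R / b%:R :> rat.
Proof.
move=> Hb Hab; rewrite ltr_pdivlMr ?ltr0n //.
by rewrite -[2]/(2%:R) -natrM ltr_nat.
Qed.

Lemma cost_eq (S : seq nat) : size S = 336%N ->
  cost csq 330 (fun j : 'I_336 => nth 0%N S j) =
  (\sum_(1 <= t < 331) (count_mem t S) ^ 2)%N%:R.
Proof.
move=> HS; rewrite /cost natr_sum; apply: eq_bigr => t _.
by rewrite load_count // /csq natrX.
Qed.

Lemma table_ok : all (fun t => count_mem t SL == nth 0 LL t) (iota 0 329).
Proof. by vm_compute. Qed.

Lemma ne_ok : all (fun j => all (fun t => nth 0 LL (nth 0 SL j) <= (nth 0 LL t).+1)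
   (iota (RJ j) (329 - RJ j)))%N (iota 0 336).
Proof. by vm_compute. Qed.

Lemma feas1 : all (fun j => (RJ j <= nth 0 SL j < 329))%N (iota 0 336).
Proof. by vm_compute. Qed.
Lemma feas2 : all (fun j => (RJ j <= nth 0 SS j < 329))%N (iota 0 336).
Proof. by vm_compute. Qed.

Lemma sum_s : (\sum_(1 <= t < 331) (count_mem t SL) ^ 2 = 706)%N.
Proof. rewrite unlock. by vm_compute. Qed.

Lemma sum_ss : (\sum_(1 <= t < 331) (count_mem t SS) ^ 2 = 352)%N.
Proof. rewrite unlock. by vm_compute. Qed.

Lemma ratio_ok : 2 < cost csq 330 (fun j : 'I_336 => nth 0%N SL j) / cost csq 330 (fun j : 'I_336 => nth 0%N SS j).
Proof.
rewrite !cost_eq ?size_SL ?size_SS //; apply: ratio_gen.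
  by rewrite sum_ss.
by rewrite sum_s sum_ss.
Qed.

Lemma valid_ok : valid_game 330 (fun j : 'I_336 => RJ j) (fun _ => 329%N).
Proof.
move=> j; rewrite /RJ.
by case: (nth 0 LL (nth 0 SL j)) => [|[|[|[|[|[|k]]]]]]; do !split.
Qed.

Theorem lemma3 :
  exists (T n : nat) (r d : 'I_n -> nat),
    valid_game T r d /\
    exists (s sstar : 'I_n -> nat),
      is_NE csq r d s /\ feasible r d sstar /\
      cost csq T s / cost csq T sstar > 2.
Proof.
exists 330%N, 336%N, (fun j => RJ j), (fun _ => 329%N).
split; first exact: valid_ok.
exists (fun j => nth 0%N SL j), (fun j => nth 0%N SS j).
split; first exact: (ne_gen _ _ _ _ _ size_SL table_ok feas1 ne_ok).
split; first exact: (feas_gen _ _ _ _ feas2).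
exact: ratio_ok.
Qed.
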